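(* For every integer $\ell\ge 1$ there exists a $(5^{\ell},30^{\ell})$ strategy for the GKS game.
   Context: The GKS game with parameter $n$ (a positive integer). A strategy pair $(S,T)$ consists of a function $S$ assigning a bit in $\{0,1\}$ to every sequence $\pi_1\pi_2\ldots\pi_i$ of distinct elements of $[n]=\{1,\dots,n\}$ with $1\le i\le n-1$, and a function $T:\{0,1\}^n\to 2^{[n]}$. For a permutation $\pi=\pi_1\ldots\pi_n$ of $[n]$ and a bit $b$, the final array $A_{\rm final}\in\{0,1\}^n$ is defined by $A_{\rm final}[\pi_i]=S(\pi_1\ldots\pi_i)$ for $1\le i\le n-1$ and $A_{\rm final}[\pi_n]=b$. The pair $(S,T)$ is a $(k,n)$ strategy if for every permutation $\pi$ of $[n]$ and every bit $b$ we have $\pi_n\in T(A_{\rm final})$, and moreover $|T(\sigma)|\le k$ for every $\sigma\in\{0,1\}^n$. *)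

(* Defs.v *)
(* [n] = {1..n} is modelled by 'I_n = {0..n-1}. *)
From mathcomp Require Import all_boot all_fingroup.
Set Implicit Arguments. Unset Strict Implicit. Unset Printing Implicit Defensive.

(* A permutation pi of [n] is p : {perm 'I_n}; pi_i (1-indexed) is p (i-1).
   The first-player function S is a total function on sequences over 'I_n;
   only its values on sequences p 0, ..., p (i-1) with 1 <= i <= n-1 matter. *)

Definition final_array (n : nat) (S : seq 'I_n -> bool) (p : {perm 'I_n})
    (b : bool) : {ffun 'I_n -> bool} :=
  [ffun x => let j := val (p^-1 x)%g in
     if j < n.-1 then S [seq p i | i <- take j.+1 (enum 'I_n)] else b].

Definition is_strategy (k n : nat) (S : seq 'I_n -> bool)
    (T : {ffun 'I_n -> bool} -> {set 'I_n}) : Prop :=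
  (forall (p : {perm 'I_n}) (b : bool) (j : 'I_n),
      val j = n.-1 -> p j \in T (final_array S p b))
  /\ (forall sigma : {ffun 'I_n -> bool}, #|T sigma| <= k).
Arguments is_strategy : clear implicits.

(* Main.v *)
Require Import Defs.
From mathcomp Require Import all_boot all_fingroup.
Set Implicit Arguments. Unset Strict Implicit. Unset Printing Implicit Defensive.

Definition Fa (X : eqType) (S : seq X -> bool) (s : seq X) (b : bool) (x : X) : bool :=
  if x \in s then S (take (index x s).+1 s) else b.

Definition valid (X : finType) (k : nat) (S : seq X -> bool)
  (T : {ffun X -> bool} -> {set X}) : Prop :=
  (forall s y b, uniq (y :: s) -> (size s).+1 = #|X| -> y \in T [ffun x => Fa S s b x])
  /\ (forall sigma, #|T sigma| <= k).
Arguments valid : clear implicits.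

Lemma cov_size (X : finType) (u : seq X) : uniq u -> (forall z, z \in u) -> size u = #|X|.
Proof.
move=> Hu Hc; rewrite -(card_uniqP Hu); apply: eq_card => z; by rewrite Hc.
Qed.

Lemma size_cov (X : finType) (u : seq X) : uniq u -> size u = #|X| -> forall z, z \in u.
Proof.
move=> Hu Hs z; rewrite -(card_uniqP Hu) in Hs.
have H := subset_cardP Hs.
have : u =i X by apply/H; apply/subsetP.
by move=> ->.
Qed.

Lemma cover_order (X : finType) (s : seq X) y : uniq (y :: s) -> (size s).+1 = #|X| ->
  forall z, z \in y :: s.
Proof. by move=> Hu Hs; apply: size_cov. Qed.

Lemma filter_take_index (X : eqType) (P : pred X) (s : seq X) x :
  x \in s -> P x ->
  filter P (take (index x s).+1 s) = take (index x (filter P s)).+1 (filter P s).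
Proof.
elim: s => [//|w s IH] /=; rewrite inE => Hx Px.
have [->|Hne] := eqVneq w x.
  by rewrite Px /= ?eqxx /= ?take0.
rewrite eq_sym (negbTE Hne) /= in Hx.
case Pw: (P w) => /=; last by rewrite IH.
by rewrite (negbTE Hne) /= IH.
Qed.

Lemma take_index_rcons (X : eqType) (s : seq X) x :
  x \in s -> take (index x s).+1 s = rcons (take (index x s) s) x.
Proof.
move=> Hx; by rewrite (take_nth x) ?index_mem // nth_index.
Qed.

Lemma Fa_map (X X' : eqType) (h : X' -> X) (hi : injective h) (S : seq X -> bool) s b x :
  Fa (fun q => S (map h q)) s b x = Fa S (map h s) b (h x).
Proof.
by rewrite /Fa mem_map // index_map // map_take.
Qed.

Lemma transport (X X' : finType) k S T : #|X| = #|X'| -> valid X k S T ->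
  exists S' T', valid X' k S' T'.
Proof.
move=> E [HV HC].
pose h (x' : X') : X := enum_val (cast_ord (esym E) (enum_rank x')).
pose h' (x : X) : X' := enum_val (cast_ord E (enum_rank x)).
have hK : cancel h h'.
  by move=> x'; rewrite /h /h' enum_valK cast_ordKV enum_rankK.
have h'K : cancel h' h.
  by move=> x; rewrite /h /h' enum_valK cast_ordK enum_rankK.
have hi : injective h := can_inj hK.
exists (fun q => S (map h q)), (fun sg => h' @: T [ffun x => sg (h' x)]).
split; last first.
  by move=> sg; apply: leq_trans (leq_imset_card _ _) (HC _).
move=> s y b Hu Hs.
have -> : y = h' (h y) by rewrite hK.
apply: imset_f.
have -> : [ffun x => [ffun x0 => Fa (fun q => S [seq h i | i <- q]) s b x0] (h' x)]
   = [ffun x => Fa S (map h s) b x].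
  by apply/ffunP => x; rewrite !ffunE Fa_map // h'K.
apply: HV; last by rewrite size_map Hs E.
by move: Hu; rewrite -(map_inj_uniq hi).
Qed.

Lemma mem_take_enum n (i : 'I_n) m : (i \in take m (enum 'I_n)) = (i < m).
Proof.
rewrite -(mem_map val_inj) map_take val_enum_ord take_iota mem_iota /=.
by rewrite leq_min ltn_ord andbT.
Qed.

Lemma index_take_enum n (i : 'I_n) m : i < m -> index i (take m (enum 'I_n)) = i.
Proof.
move=> Hi; rewrite -(index_map val_inj) map_take val_enum_ord take_iota.
have Hk : i < minn m n by rewrite leq_min Hi ltn_ord.
have := @index_uniq _ 0 i (iota 0 (minn m n)); rewrite size_iota nth_iota // add0n => ->//.
exact: iota_uniq.
Qed.

Lemma to_strategy n k S T : valid 'I_n k S T -> is_strategy k n S T.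
Proof.
move=> [HV HC]; split => //.
move=> p b j Hj.
set L := take n.-1 (enum 'I_n).
set s := [seq p i | i <- L].
have Hn : 0 < n by case: j {Hj} => m /= Hm; apply: leq_ltn_trans Hm.
have -> : final_array S p b = [ffun x => Fa S s b x].
  apply/ffunP => x; rewrite !ffunE /Fa.
  rewrite -[in RHS](permKV p x); set i := (p^-1 x)%g.
  rewrite /s (mem_map perm_inj) index_map; last exact: perm_inj.
  rewrite /L mem_take_enum; case: ifP => // Hi.
  by rewrite index_take_enum // !map_take take_takel.
apply: HV.
  rewrite /s -/(map p (j :: L)) (map_inj_uniq perm_inj) /= /L mem_take_enum Hj ltnn /=.
  by rewrite take_uniq // enum_uniq.
rewrite /s size_map /L size_take size_enum_ord card_ord.
by rewrite ltn_predL Hn prednK.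
Qed.

Definition bs (A Y : eqType) (a : A) (q : seq (A * Y)) : seq Y :=
  [seq z.2 | z <- q & z.1 == a].

Lemma filter_bs (A Y : eqType) (a : A) (q : seq (A * Y)) :
  [seq z <- q | z.1 == a] = map (pair a) (bs a q).
Proof.
rewrite /bs -map_comp; apply/esym/map_id_in => -[a' z].
by rewrite mem_filter /= => /andP[/eqP -> _].
Qed.

Lemma pair_inj (A Y : Type) (a : A) : injective (@pair A Y a).
Proof. by move=> z1 z2 []. Qed.

Lemma mem_bs (A Y : eqType) (a : A) (q : seq (A * Y)) z :
  (z \in bs a q) = ((a, z) \in q).
Proof.
rewrite -(mem_map (@pair_inj A Y a)) -filter_bs mem_filter /= eqxx //.
Qed.

Lemma uniq_bs (A Y : eqType) (a : A) (q : seq (A * Y)) : uniq q -> uniq (bs a q).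
Proof.
move=> Hq; rewrite -(map_inj_uniq (@pair_inj A Y a)) -filter_bs.
exact: filter_uniq.
Qed.

Lemma bs_take (A Y : eqType) (q : seq (A * Y)) a z : (a, z) \in q ->
  bs a (take (index (a, z) q).+1 q) = take (index z (bs a q)).+1 (bs a q).
Proof.
move=> Hx.
have := @filter_take_index _ (fun w : A * Y => w.1 == a) q (a, z) Hx (eqxx a).
rewrite !filter_bs index_map; last exact: pair_inj.
rewrite -map_take; apply: inj_map; exact: pair_inj.
Qed.

Lemma bs_rcons (A Y : eqType) (a : A) (q : seq (A * Y)) x :
  bs a (rcons q x) = if x.1 == a then rcons (bs a q) x.2 else bs a q.
Proof. by rewrite /bs filter_rcons; case: ifP => _; rewrite ?map_rcons. Qed.

Lemma bs_rev (A Y : eqType) (a : A) (q : seq (A * Y)) : bs a (rev q) = rev (bs a q).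
Proof. by rewrite /bs filter_rev map_rev. Qed.

Lemma size_bs_le (A : eqType) (Y : finType) (a : A) (q : seq (A * Y)) :
  uniq q -> size (bs a q) <= #|Y|.
Proof. by move=> Hq; rewrite -(card_uniqP (uniq_bs a Hq)) max_card. Qed.

Lemma size_bs_order (A Y : finType) (s : seq (A * Y)) y a :
  uniq (y :: s) -> (size s).+1 = #|{: A * Y}| ->
  size (bs a s) = if a == y.1 then #|Y|.-1 else #|Y|.
Proof.
move=> Hu Hs.
have Hc := cover_order Hu Hs.
have H1 : size (bs a (y :: s)) = #|Y|.
  apply: cov_size; first exact: uniq_bs.
  by move=> z; rewrite mem_bs.
move: H1; rewrite /bs /=; case: (eqVneq y.1 a) => [Ha|Ha] /= H1.
  by rewrite -H1.
by rewrite -H1.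
Qed.

Fixpoint cbr (A : eqType) (Y : finType) (r : seq (A * Y)) : seq A :=
  match r with
  | [::] => [::]
  | x :: r' => cbr r' ++ (if size (bs x.1 (x :: r')) == #|Y| then [:: x.1] else [::])
  end.

Definition cb (A : eqType) (Y : finType) (q : seq (A * Y)) := cbr (rev q).

Lemma cb_rcons (A : eqType) (Y : finType) (q : seq (A * Y)) x :
  cb (rcons q x) = cb q ++ (if size (bs x.1 (rcons q x)) == #|Y| then [:: x.1] else [::]).
Proof.
by rewrite /cb rev_rcons /= -rev_rcons bs_rev size_rev.
Qed.

Lemma mem_cb (A : eqType) (Y : finType) (q : seq (A * Y)) a :
  0 < #|Y| -> uniq q -> (a \in cb q) = (size (bs a q) == #|Y|).
Proof.
move=> Y0; elim/last_ind: q => [|q x IH] Hu.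
  by rewrite /cb /=; case: #|Y| Y0.
have /andP[Hx Hq] : (x \notin q) && uniq q by rewrite -rcons_uniq.
rewrite cb_rcons mem_cat IH // !bs_rcons.
case: (eqVneq x.1 a) => [Ha|Ha].
  have Hle := size_bs_le a Hu; rewrite bs_rcons Ha eqxx size_rcons in Hle.
  rewrite -Ha eqxx size_rcons Ha.
  rewrite (ltn_eqF Hle) /=; case: ifP => //=; by rewrite inE eqxx.
case: ifP => _; rewrite ?orbF // inE.
by rewrite [a == _]eq_sym (negbTE Ha) orbF.
Qed.

Lemma uniq_cb (A : eqType) (Y : finType) (q : seq (A * Y)) :
  0 < #|Y| -> uniq q -> uniq (cb q).
Proof.
move=> Y0; elim/last_ind: q => [|q x IH] Hu; first by [].
have /andP[Hx Hq] : (x \notin q) && uniq q by rewrite -rcons_uniq.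
rewrite cb_rcons bs_rcons eqxx size_rcons; case: ifP => H; last by rewrite cats0 IH.
rewrite cat_uniq IH //= andbT orbF mem_cb //.
by rewrite -(eqP H) neq_ltn ltnSn.
Qed.

Lemma cb_cat (A : eqType) (Y : finType) (q1 q2 : seq (A * Y)) :
  exists t, cb (q1 ++ q2) = cb q1 ++ t.
Proof.
elim/last_ind: q2 => [|q2 x [t Ht]]; first by exists [::]; rewrite !cats0.
rewrite -rcons_cat cb_rcons Ht -catA.
by eexists.
Qed.

Lemma cb_take (A : eqType) (Y : finType) (s : seq (A * Y)) x :
  0 < #|Y| -> uniq s -> x \in s ->
  size (bs x.1 (take (index x s).+1 s)) = #|Y| ->
  cb (take (index x s).+1 s) = take (index x.1 (cb s)).+1 (cb s).
Proof.
move=> Y0 Hu Hx.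
have [t Ht] := cb_cat (take (index x s).+1 s) (drop (index x s).+1 s).
rewrite cat_take_drop in Ht; rewrite Ht.
rewrite (take_index_rcons Hx) => H.
set u := take (index x s) s in H *.
have Hcu : cb (rcons u x) = cb u ++ [:: x.1] by rewrite cb_rcons H eqxx.
have Hnot : x.1 \notin cb u.
  rewrite mem_cb ?take_uniq //.
  move: H; rewrite bs_rcons eqxx size_rcons => <-.
  by rewrite neq_ltn ltnSn.
rewrite Hcu -catA index_cat (negbTE Hnot) /= eqxx addn0 take_cat ltnNge leqnSn /= subSnn /= take0.
by [].
Qed.

Definition mkS (X : Type) (Sb : X -> seq X -> bool) (q : seq X) : bool :=
  if q is x0 :: q' then Sb (last x0 q') q else false.

Lemma mkS_rcons (X : Type) (Sb : X -> seq X -> bool) u x : mkS Sb (rcons u x) = Sb x (rcons u x).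
Proof. by case: u => [|x0 u] //=; rewrite last_rcons. Qed.

Lemma Fa_mkS (A Y : eqType) (Sb : A * Y -> seq (A * Y) -> bool) s b a z :
  Fa (mkS Sb) s b (a, z) =
  if z \in bs a s then Sb (a, z) (take (index (a, z) s).+1 s) else b.
Proof.
rewrite /Fa mem_bs; case: ifP => // Hin.
by rewrite (take_index_rcons Hin) mkS_rcons -(take_index_rcons Hin).
Qed.

Lemma card_bigcup_le (I X : finType) (P : pred I) (F : I -> {set X}) :
  #|\bigcup_(i | P i) F i| <= \sum_(i | P i) #|F i|.
Proof.
apply: (big_rec2 (fun (U : {set X}) (n : nat) => #|U| <= n)); first by rewrite cards0.
move=> i U n _ H; apply: leq_trans (leq_card_setU _ _) _.
by rewrite leq_add2l.
Qed.

Definition xorp (Y : eqType) (S2 : seq Y -> bool) (r : seq Y) : bool :=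
  \big[addb/false]_(w <- r) Fa S2 r false w.

Definition Sbp (A : eqType) (Y : finType) (S1 : seq A -> bool) (S2 : seq Y -> bool)
  (x : A * Y) (q : seq (A * Y)) : bool :=
  let r := bs x.1 q in
  if size r < #|Y| then S2 r else S1 (cb q) (+) xorp S2 (take (size r).-1 r).

Definition Tp (A Y : finType) (T1 : {ffun A -> bool} -> {set A})
  (T2 : {ffun Y -> bool} -> {set Y}) (sg : {ffun A * Y -> bool}) : {set A * Y} :=
  \bigcup_(a in T1 [ffun a => \big[addb/false]_(z : Y) sg (a, z)])
     [set (a, z) | z in T2 [ffun z => sg (a, z)]].

Lemma product (A Y : finType) k1 k2 S1 T1 S2 T2 :
  valid A k1 S1 T1 -> valid Y k2 S2 T2 ->
  valid (A * Y)%type (k1 * k2) (mkS (Sbp S1 S2)) (Tp T1 T2).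
Proof.
move=> [HV1 HC1] [HV2 HC2]; split; last first.
  move=> sg; rewrite /Tp; apply: leq_trans (card_bigcup_le _ _) _.
  apply: (@leq_trans (\sum_(a in T1 [ffun a => \big[addb/false]_(z : Y) sg (a, z)]) k2)).
    by apply: leq_sum => a _; apply: leq_trans (leq_imset_card _ _) (HC2 _).
  by rewrite sum_nat_const leq_mul2r HC1 orbT.
move=> s [ya yz] b Hu Hs.
set sg := [ffun x => Fa _ s b x].
have Y0 : 0 < #|Y| by apply/card_gt0P; exists yz.
have /andP[Hys Hus] := Hu.
have Hrow : forall a z, sg (a, z) =
  if z \in bs a s then
    (if (index z (bs a s)).+1 < #|Y| then S2 (take (index z (bs a s)).+1 (bs a s))
     else S1 (cb (take (index (a, z) s).+1 s)) (+) xorp S2 (take (index z (bs a s)) (bs a s)))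
  else b.
  move=> a z; rewrite ffunE Fa_mkS; case: ifP => // Hin.
  rewrite /Sbp /= bs_take -?mem_bs // size_takel ?index_mem //=.
  by rewrite take_takel.
have Hsz := fun a => size_bs_order a Hu Hs.
set r := bs ya s.
have Hr : size r = #|Y|.-1 by rewrite /r Hsz /= eqxx.
have Hin2 : yz \in T2 [ffun z => sg (ya, z)].
  have -> : [ffun z => sg (ya, z)] = [ffun z => Fa S2 r b z].
    apply/ffunP => z; rewrite [LHS]ffunE [RHS]ffunE Hrow /Fa -/r; case: ifP => // Hz.
    have Hj : index z r < size r by rewrite index_mem.
    by rewrite ifT // -(prednK Y0) ltnS -Hr.
  apply: HV2; last by rewrite Hr prednK.
  rewrite /= uniq_bs // andbT /r mem_bs //.
set c := cb s.
set tau := [ffun a => \big[addb/false]_(z : Y) sg (a, z)].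
have Hnf : forall a, a != ya -> tau a = S1 (take (index a c).+1 c).
  move=> a Ha.
  have Hsa : size (bs a s) = #|Y| by rewrite Hsz /= (negbTE Ha).
  have Hua : uniq (bs a s) := uniq_bs a Hus.
  case/lastP E : (bs a s) Hsa Hua => [|r' y'] Hsa Hua; first by rewrite -Hsa in Y0.
  rewrite rcons_uniq in Hua; case/andP: Hua => Hy' Hr'.
  rewrite size_rcons in Hsa.
  have Hw : forall w, w \in r' -> sg (a, w) = Fa S2 r' false w.
    move=> w Hw; rewrite Hrow E -cats1 mem_cat Hw /= index_cat Hw /Fa Hw.
    have Hj : index w r' < size r' by rewrite index_mem.
    by rewrite -Hsa ltnS Hj takel_cat.
  have Hin : (a, y') \in s by rewrite -mem_bs E mem_rcons mem_head.
  have Hlast : sg (a, y') = S1 (take (index a c).+1 c) (+) xorp S2 r'.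
    rewrite Hrow E mem_rcons mem_head -cats1 index_cat (negbTE Hy') /= eqxx addn0.
    rewrite -Hsa ltnn take_size_cat //.
    rewrite cb_take //.
    rewrite /= bs_take // E -cats1 index_cat (negbTE Hy') /= eqxx addn0.
    by rewrite take_oversize ?size_cat /= ?addn1 // cats1 size_rcons.
  rewrite /tau ffunE.
  have Hp : perm_eq (index_enum Y) (rcons r' y').
    apply: uniq_perm; first exact: index_enum_uniq.
      by rewrite rcons_uniq Hy' Hr'.
    move=> z; rewrite mem_index_enum; apply/esym/size_cov.
      by rewrite rcons_uniq Hy' Hr'.
    by rewrite size_rcons.
  rewrite (perm_big _ Hp) -cats1 big_cat big_seq1 /= Hlast.
  rewrite (eq_big_seq _ Hw) -/(xorp S2 r').
  by rewrite addbC -addbA addbb addbF.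
have Hmc : forall a, (a \in c) = (a != ya).
  move=> a; rewrite /c mem_cb // Hsz.
  rewrite /=; case: (eqVneq a ya) => [_|Ha] /=; last by rewrite eqxx.
  by rewrite ltn_eqF // ltn_predL.
have Htau : tau = [ffun a => Fa S1 c (tau ya) a].
  apply/ffunP => a; rewrite [RHS]ffunE /Fa Hmc.
  case: (eqVneq a ya) => [->|Ha] //=.
  exact: Hnf.
have Hin1 : ya \in T1 tau.
  rewrite Htau; apply: HV1.
    by rewrite /= Hmc eqxx /= uniq_cb.
  apply: (@cov_size _ (ya :: c)).
    by rewrite /= Hmc eqxx /= uniq_cb.
  by move=> a; rewrite inE Hmc; case: eqP.
apply/bigcupP; exists ya => //.
by apply/imsetP; exists yz.
Qed.

Definition tbl : seq (seq bool) := [:: [:: false;false;false;false;false;false];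
 [:: false;false;true;false;true;true]; [:: false;true;false;true;false;true];
 [:: false;true;true;true;true;false]; [:: true;false;false;true;true;false];
 [:: true;false;true;true;false;true]].
Definition gn (f z : nat) : bool := nth false (nth [::] tbl f) z.
Definition I6 := iota 0 6.

Lemma Dn : all (fun f => all (fun f' => all (fun y => all (fun y' =>
  [&& f != y, f' != y' & all (fun z => gn f z (+) (z==y) == gn f' z (+) (z==y')) I6]
   ==> (y == y')) I6) I6) I6) I6.
Proof. by []. Qed.

Lemma D0n : all (fun f => all (fun f' => all (fun y =>
  (y != f) ==> ~~ all (fun z => gn f' z == gn f z (+) (z==y)) I6) I6) I6) I6.
Proof. by []. Qed.

Lemma Fdn : all (fun f => all (fun f' =>
  all (fun z => gn f z == gn f' z) I6 ==> (f == f')) I6) I6.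
Proof. by []. Qed.

Definition g (f z : 'I_6) : bool := gn f z.

Lemma inI6 (i : 'I_6) : val i \in I6.
Proof. by rewrite mem_iota ltn_ord. Qed.

Lemma allI6 (P : nat -> bool) : (forall z : 'I_6, P z) -> all P I6.
Proof.
move=> H; apply/allP => z; rewrite mem_iota => /andP[_ Hz].
exact: (H (Ordinal Hz)).
Qed.

Lemma gD (f f' y y' : 'I_6) : f != y -> f' != y' ->
  (forall z, g f z (+) (z == y) = g f' z (+) (z == y')) -> y = y'.
Proof.
move=> H1 H2 H3; apply/eqP.
have /allP H0 := Dn; have H := H0 _ (inI6 f).
move/allP/(_ _ (inI6 f'))/allP/(_ _ (inI6 y))/allP/(_ _ (inI6 y'))/implyP: H => H.
apply: H.
rewrite H1 H2 !andTb; apply/allP => z; rewrite mem_iota => /andP[_ Hz].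
by have := H3 (Ordinal Hz); rewrite /g /= => ->.
Qed.

Lemma gD0 (f f' y : 'I_6) : y != f -> ~ (forall z, g f' z = g f z (+) (z == y)).
Proof.
move=> H1 H2.
have /allP H0 := D0n; have H := H0 _ (inI6 f).
move/allP/(_ _ (inI6 f'))/allP/(_ _ (inI6 y))/implyP/(_ H1)/negP: H; apply.
apply/allP => z; rewrite mem_iota => /andP[_ Hz].
by have := H2 (Ordinal Hz); rewrite /g /= => ->.
Qed.

Lemma gFd (f f' : 'I_6) : (forall z, g f z = g f' z) -> f = f'.
Proof.
move=> H; apply/eqP.
have /allP H0 := Fdn; have H1 := H0 _ (inI6 f).
move/allP/(_ _ (inI6 f'))/implyP: H1 => H1; apply: H1.
apply/allP => z; rewrite mem_iota => /andP[_ Hz].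
by have := H (Ordinal Hz); rewrite /g /= => ->.
Qed.

Definition Sbb (x : 'I_5 * 'I_6) (q : seq ('I_5 * 'I_6)) : bool :=
  let r := bs x.1 q in let f := head x.2 r in
  if size r < 6 then g f x.2 else ~~ g f x.2.

Definition rowf (sg : {ffun 'I_5 * 'I_6 -> bool}) (a : 'I_5) : {ffun 'I_6 -> bool} :=
  [ffun z => sg (a, z)].
Definition isCW (r : {ffun 'I_6 -> bool}) (f : 'I_6) := [forall z, r z == g f z].
Definition isFl (r : {ffun 'I_6 -> bool}) (f y : 'I_6) :=
  [forall z, r z == g f z (+) (z == y)].

Definition Tb (sg : {ffun 'I_5 * 'I_6 -> bool}) : {set 'I_5 * 'I_6} :=
  match [pick a | [exists f, isCW (rowf sg a) f]] with
  | Some a => [set x | (x.1 == a) && ~~ isCW (rowf sg a) x.2]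
  | None => [set x | [exists f, (f != x.2) && isFl (rowf sg x.1) f x.2]]
  end.

Lemma Tb_card sg : #|Tb sg| <= 5.
Proof.
rewrite /Tb; case: pickP => [a /existsP[f0 Hf0]|Hnone].
  apply: (@leq_trans #|(pair a) @: [set~ f0]|); last first.
    by rewrite card_imset ?cardsC1 ?card_ord //; exact: pair_inj.
  apply: subset_leq_card; apply/subsetP => -[a' z]; rewrite inE /= => /andP[/eqP -> Hz].
  apply/imsetP; exists z => //; rewrite !inE; apply: contraNneq Hz => ->.
  exact: Hf0.
pose u a := odflt ord0 [pick z | [exists f, (f != z) && isFl (rowf sg a) f z]].
apply: (@leq_trans #|[set (a, u a) | a : 'I_5]|); last first.
  by apply: leq_trans (leq_imset_card _ _) _; rewrite card_ord.
apply: subset_leq_card; apply/subsetP => -[a z]; rewrite inE /= => Hz.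
apply/imsetP; exists a => //; congr pair.
rewrite /u; case: pickP => [z' Hz'|/(_ z)]; last by rewrite Hz.
move: Hz Hz' => /existsP[f /andP[Hf /forallP H]] /existsP[f' /andP[Hf' /forallP H']].
apply: (@gD f f') => //.
by move=> w; rewrite -(eqP (H w)) (eqP (H' w)).
Qed.

Lemma neq_neg (b c : bool) : b != c -> b = ~~ c.
Proof. by case: b; case: c. Qed.

Lemma base : valid ('I_5 * 'I_6)%type 5 (mkS Sbb) Tb.
Proof.
split; last exact: Tb_card.
move=> s [ya yz] b Hu Hs.
set sg := [ffun x => Fa _ s b x].
have /andP[Hys Hus] := Hu.
have Hsz := fun a => size_bs_order a Hu Hs.
rewrite card_ord in Hsz.
have Hrow : forall a z, sg (a, z) =
  if z \in bs a s then
    (if (index z (bs a s)).+1 < 6 then g (head yz (bs a s)) z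
     else ~~ g (head yz (bs a s)) z)
  else b.
  move=> a z; rewrite ffunE Fa_mkS; case: ifP => // Hin.
  rewrite /Sbb /= bs_take -?mem_bs // size_takel ?index_mem //=.
  by case: (bs a s) Hin.
have Hnf : forall a, a != ya -> exists f y', f != y' /\ forall z, sg (a, z) = g f z (+) (z == y').
  move=> a Ha.
  have Hsa : size (bs a s) = 6 by rewrite Hsz /= (negbTE Ha).
  have Hua : uniq (bs a s) := uniq_bs a Hus.
  have Hcov : forall z, z \in bs a s by apply: size_cov; rewrite // card_ord.
  case/lastP E : (bs a s) Hsa Hua Hcov => [//|r' y'] Hsa Hua Hcov.
  rewrite rcons_uniq in Hua; case/andP: Hua => Hy' Hr'.
  rewrite size_rcons in Hsa.
  case E' : r' (Hsa) => [//|f r''] _.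
  exists f, y'; split.
    by apply: contraNneq Hy' => <-; rewrite E' mem_head.
  have Hh : head yz (rcons r' y') = f by rewrite E'.
  move=> z; rewrite Hrow E Hcov Hh.
  have := Hcov z; rewrite mem_rcons inE; case: eqP => [->|Hzy] /= Hz.
    rewrite -cats1 index_cat (negbTE Hy') /= eqxx addn0 Hsa ltnn.
    by rewrite addbT.
  rewrite -cats1 index_cat Hz addbF.
  have Hj : index z r' < size r' by rewrite index_mem.
  by move: Hj; rewrite -ltnS Hsa => ->.
have [f [Hf [Hfz Hfy]]] : exists f, f != yz /\ (forall z, z != yz -> sg (ya, z) = g f z)
    /\ sg (ya, yz) = b.
  set r := bs ya s.
  have Hr : size r = 5 by rewrite /r Hsz /= eqxx.
  have Hyr : yz \notin r by rewrite /r mem_bs.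
  have Hcov : forall z, z \in yz :: r.
    apply: size_cov; last by rewrite /= Hr card_ord.
    by rewrite /= Hyr uniq_bs.
  case E : r (Hr) => [//|f r'] _.
  exists f; split; first by apply: contraNneq Hyr => <-; rewrite E mem_head.
  split.
    move=> z Hz; rewrite Hrow -/r.
    have Hzr : z \in r by have := Hcov z; rewrite inE (negbTE Hz).
    have Hh : head yz r = f by rewrite E.
    rewrite Hzr Hh.
    have Hj : index z r < size r by rewrite index_mem.
    by move: Hj; rewrite Hr -ltnS => ->.
  by rewrite Hrow -/r (negbTE Hyr).
rewrite /Tb; case: pickP => [a /existsP[f0 /forallP Hf0]|Hnone].
  have Ha : a = ya.
    apply/eqP; apply/negPn/negP => Ha.
    have [f1 [y' [Hf1 H1]]] := Hnf a Ha.
    apply: (@gD0 f1 f0 y'); first by rewrite eq_sym.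
    by move=> z; rewrite -H1; have := Hf0 z; rewrite ffunE => /eqP ->.
  subst a; rewrite inE /= eqxx /=; apply/negP => /forallP Hc.
  have Hc' : forall z, sg (ya, z) = g yz z by move=> z; have := Hc z; rewrite ffunE => /eqP.
  case: (boolP (b == g f yz)) => Hb.
    suff : yz = f by move=> E; rewrite E eqxx in Hf.
    apply: gFd => z; rewrite -Hc'.
    case: (eqVneq z yz) => [->|Hz]; first by rewrite Hfy (eqP Hb).
    by rewrite Hfz.
  apply: (@gD0 f yz yz); first by rewrite eq_sym.
  move=> z; rewrite -Hc'.
  case: (eqVneq z yz) => [->|Hz]; last by rewrite Hfz // addbF.
  by rewrite Hfy addbT; apply: neq_neg.
rewrite inE /=; apply/existsP; exists f; rewrite Hf /=.
case: (boolP (b == g f yz)) => Hb.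
  have := Hnone ya; rewrite /= => /negbT/negP; case; apply/existsP; exists f.
  apply/forallP => z; rewrite ffunE; apply/eqP.
  case: (eqVneq z yz) => [->|Hz]; first by rewrite Hfy (eqP Hb).
  by rewrite Hfz.
apply/forallP => z; rewrite ffunE; apply/eqP.
case: (eqVneq z yz) => [->|Hz]; last by rewrite Hfz // addbF.
by rewrite Hfy addbT; apply: neq_neg.
Qed.

Lemma powers l : 1 <= l ->
  exists (X : finType) (S : seq X -> bool) (T : {ffun X -> bool} -> {set X}),
    #|X| = 30 ^ l /\ valid X (5 ^ l) S T.
Proof.
elim: l => [//|l IH] _.
case: l IH => [|l] IH.
  exists ('I_5 * 'I_6)%type, (mkS Sbb), Tb; split; first by rewrite card_prod !card_ord.
  exact: base.
have [X [S [T [HX HV]]]] := IH erefl.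
exists (('I_5 * 'I_6) * X)%type, (mkS (Sbp (mkS Sbb) S)), (Tp Tb T); split.
  by rewrite !card_prod !card_ord HX [RHS]expnS.
by rewrite expnS; apply: product => //; exact: base.
Qed.

Unset Implicit Arguments.

Theorem lemma3 (l : nat) : 1 <= l ->
  exists (S : seq 'I_(30 ^ l) -> bool)
         (T : {ffun 'I_(30 ^ l) -> bool} -> {set 'I_(30 ^ l)}),
    is_strategy (5 ^ l) (30 ^ l) S T.
Proof.
move=> Hl.
have [X [S [T [HX HV]]]] := powers Hl.
have HX' : #|X| = #|'I_(30 ^ l)| by rewrite card_ord.
have [S' [T' HV']] := transport HX' HV.
exists S', T'; exact: to_strategy.
Qed.
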